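(* The regret of the FO-UCB with $g(k, \delta)$-bounded first-order algorithm for the MAB problem with $K$ arms, auxiliary functions $f_i(x) = \frac{1}{2}(x-\mu_i)^2$, period $T$, $\delta=\frac{1}{T^2}$ satisfies \[ R_T \leq \sum_{i: \Delta_i>0} \Delta_i \left (g^{-1}\left (\frac{\Delta_i^2}{8}, \frac{1}{T^2} \right ) + 2 \right ). \]
   Context: Stochastic multi-armed bandit with $K$ arms and $T$ rounds; arm $i$ has reward distribution $\mathcal{D}_i$ with mean $\mu_i$; rewards are drawn independently each time an arm is played. $i^* = \arg\max_i \mu_i$, $\Delta_i = \mu_{i^*} - \mu_i$, and the regret is $R_T = T\max_i \mu_i - \sum_{t=1}^T \mathbb{E}[\mu_{A_t}]$, where $A_t$ is the arm played in round $t$. For minimizing $f:\mathbb{R}\to\mathbb{R}$ with minimizer $x^*$ through a stochastic first-order oracle $\mathcal{G}$, an algorithm $x_{k+1} = \mathcal{A}(x_0, \mathcal{G}(x_0), \dots, x_k, \mathcal{G}(x_k))$ is a $g(k,\delta)$-bounded (bounding) first-order algorithm if for every $k\in\mathbb{N}$ and $\delta>0$, $f(x_k) - f(x^* ) \le g(k,\delta)$ with probability at least $1-\delta$. $g^{-1}(\cdot,\delta)$ denotes the inverse in the first argument: $g(g^{-1}(x,\delta),\delta) = x$. FO-UCB: for each arm $i$ take $f_i(x) = \frac12(x-\mu_i)^2$ with stochastic gradient oracle $\nabla f_i(x,\xi) = x - \xi$, $\xi\sim\mathcal{D}_i$ (a pulled reward of arm $i$); run the $g(k,\delta)$-bounded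 algorithm $\mathcal{A}$ on each arm's samples, producing iterates $x_i^k$; with $n_i(t) = \sum_{s=1}^t \mathbb{1}\{A_s = i\}$, the index is $UCB(i, n_i(t), \delta) = x_i^{n_i(t)} + \sqrt{2 g(n_i(t), \delta)}$, and each round the arm with the largest index is played. *)

(* Defs.v *)
From mathcomp Require Import all_boot all_order all_algebra.
From mathcomp Require Import all_classical all_reals all_analysis.
Set Implicit Arguments. Unset Strict Implicit. Unset Printing Implicit Defensive.
Import Order.TTheory GRing.Theory Num.Theory.
Local Open Scope classical_set_scope.
Local Open Scope ring_scope.

Section FOUCB.
Variable R : realType.

Definition aux_f (mu x : R) : R := 2^-1 * (x - mu) ^+ 2.

Definition sgrad (x xi : R) : R := x - xi.

(* A deterministic first-order algorithm is a map from the history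
   [(x_0, G(x_0)); ...; (x_k, G(x_k))] to the next iterate x_{k+1};
   x0 is the initial point.  The j-th oracle call (at x_j) uses the sample
   xi j.  [fo_hist A x0 xi k] is the history of the first k queries. *)
Fixpoint fo_hist (A : seq (R * R) -> R) (x0 : R) (xi : nat -> R) (k : nat)
  : seq (R * R) :=
  match k with
  | 0 => [::]
  | k'.+1 =>
      let h := fo_hist A x0 xi k' in
      let xk := if k' is 0 then x0 else A h in
      rcons h (xk, sgrad xk (xi k'))
  end.

Definition fo_iter (A : seq (R * R) -> R) (x0 : R) (xi : nat -> R) (k : nat) : R :=
  if k is 0 then x0 else A (fo_hist A x0 xi k).

Definition fo_bounded d (Omega : measurableType d) (P : probability Omega R)
  (A : seq (R * R) -> R) (x0 : R) (xi_seq : nat -> Omega -> R)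
  (f : R -> R) (xstar : R) (g : R -> R -> R) : Prop :=
  forall (k : nat) (delta : R), 0 < delta ->
    ((1 - delta)%:E <=
     P [set w | (f (fo_iter A x0 (fun j => xi_seq j w) k) - f xstar <= g k%:R delta)%R])%E.

Definition mutually_independent d (Omega : measurableType d)
  (P : probability Omega R) (I : eqType) (Y : I -> Omega -> R) : Prop :=
  forall (J : seq I) (B : I -> set R), uniq J ->
    (forall j, j \in J -> measurable (B j)) ->
    P (\big[setI/setT]_(j <- J) (Y j @^-1` B j)) =
    (\prod_(j <- J) P (Y j @^-1` B j))%E.

Definition pulls (K : nat) (pick : nat -> 'I_K) (i : 'I_K) (t : nat) : nat :=
  count (fun s => pick s == i) (iota 0 t).

Definition ucb_index (A : seq (R * R) -> R) (x0 : R) (g : R -> R -> R)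
  (delta : R) (xi : nat -> R) (n : nat) : R :=
  fo_iter A x0 xi n + Num.sqrt (2 * g n%:R delta).

End FOUCB.

(* Main.v *)
Require Import Defs.
From mathcomp Require Import all_boot all_order all_algebra.
From mathcomp Require Import all_classical all_reals all_analysis.
From mathcomp Require Import lra zify.
Import Order.TTheory GRing.Theory Num.Theory.
Local Open Scope classical_set_scope.
Local Open Scope ring_scope.


Section Jtool.
Context {R : realType} {d : measure_display} {Omega : measurableType d}
  (P : probability Omega R).

Definition Int (f : Omega -> R) := P.-integrable setT (EFin \o f).
Definition J (f : Omega -> R) : R := fine (\int[P]_w (f w)%:E)%E.

Lemma IJ {f} : Int f -> (\int[P]_w (f w)%:E)%E = (J f)%:E.
Proof. by move=> h; rewrite /J fineK //; exact: integrable_fin_num h. Qed.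

Lemma Int_eq {f g} : Int f -> (forall w, f w = g w) -> Int g.
Proof.
move=> hf fg; apply: eq_integrable hf => // x _ /=; by rewrite fg.
Qed.

Lemma Int_add {f g} : Int f -> Int g -> Int (fun w => f w + g w).
Proof.
move=> hf hg; have := integrableD measurableT hf hg.
by apply: eq_integrable => // x _ /=; rewrite EFinD.
Qed.

Lemma Int_scale c {f} : Int f -> Int (fun w => c * f w).
Proof.
move=> hf; have := integrableZl measurableT c hf.
by apply: eq_integrable => // x _ /=; rewrite EFinM.
Qed.

Lemma Int_indic A : measurable A -> Int (\1_A).
Proof. by move=> mA; exact: integrable_indic. Qed.

Lemma Int_cst c : Int (fun _ => c).
Proof.
have := Int_scale c (Int_indic setT measurableT).
by apply: eq_integrable => // x _ /=; rewrite indicT mulr1.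
Qed.

Lemma Int_sum (I : Type) (s : seq I) (p : pred I) (F : I -> Omega -> R) :
  (forall j, Int (F j)) -> Int (fun w => \sum_(j <- s | p j) F j w).
Proof.
move=> hF; elim: s => [|a s IH].
  apply: (Int_eq (Int_cst 0)) => x. by rewrite big_nil.
have [pa|pa] := boolP (p a).
  by apply: (Int_eq (Int_add (hF a) IH)) => x; rewrite big_cons pa.
by apply: (Int_eq IH) => x; rewrite big_cons (negbTE pa).
Qed.

Lemma J_add f g : Int f -> Int g -> J (fun w => f w + g w) = J f + J g.
Proof.
move=> hf hg; rewrite /J.
rewrite (_ : (\int[P]_w ((f w + g w)%:E))%E = (\int[P]_w ((EFin \o f) \+ (EFin \o g)) w)%E); last first.
  by apply: eq_integral => x _ /=; rewrite EFinD.
by rewrite integralD_EFin // -/(J f) -/(J g) (IJ hf) (IJ hg).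
Qed.

Lemma J_scale c f : Int f -> J (fun w => c * f w) = c * J f.
Proof.
move=> hf; rewrite /J.
under eq_integral do rewrite EFinM.
by rewrite integralZl // -/(J f) (IJ hf).
Qed.

Lemma J_cst c : J (fun _ => c) = c.
Proof.
Proof. rewrite /J. have := expectation_cst P c. rewrite unlock /= => ->. by []. Qed.

Lemma J_indic A : measurable A -> J (\1_A) = fine (P A).
Proof. by move=> mA; rewrite /J integral_indic // setIT. Qed.

Lemma J_sum (I : Type) (s : seq I) (p : pred I) (F : I -> Omega -> R) :
  (forall j, Int (F j)) ->
  J (fun w => \sum_(j <- s | p j) F j w) = \sum_(j <- s | p j) J (F j).
Proof.
move=> hF; elim: s => [|a s IH].
  by rewrite big_nil -[RHS](J_cst 0); congr J; apply: funext => x; rewrite big_nil.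
have [pa|pa] := boolP (p a).
  rewrite big_cons pa -IH -J_add //; last exact: Int_sum.
  by congr J; apply: funext => x; rewrite big_cons pa.
rewrite big_cons (negbTE pa) -IH.
by congr J; apply: funext => x; rewrite big_cons (negbTE pa).
Qed.

Lemma J_le f g : Int f -> Int g -> (forall w, f w <= g w) -> J f <= J g.
Proof.
move=> hf hg fg; rewrite -lee_fin -(IJ hf) -(IJ hg).
by apply: le_integral => // x _; rewrite lee_fin.
Qed.

Lemma fineP_ge0 A : 0 <= fine (P A).
Proof. exact: fine_ge0. Qed.

Lemma finePE A : measurable A -> P A = (fine (P A))%:E.
Proof. by move=> mA; rewrite fineK // fin_num_measure. Qed.

End Jtool.


Lemma pulls_S K (p : nat -> 'I_K) i t : pulls p i t.+1 = (pulls p i t + (p t == i))%N.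
Proof. by rewrite /pulls -addn1 iotaD count_cat /= add0n addn0. Qed.

Lemma pulls_le K (p : nat -> 'I_K) i t : (pulls p i t <= t)%N.
Proof. by rewrite /pulls (leq_trans (count_size _ _)) // size_iota. Qed.

Lemma pulls_le2 K (p : nat -> 'I_K) i j t : i != j ->
  (pulls p i t + pulls p j t <= t)%N.
Proof.
move=> ij; elim: t => [|t IH]; first by rewrite /pulls.
rewrite !pulls_S; have [pti|pti] := eqVneq (p t) i.
  have : (p t == j) = false by apply/negbTE; rewrite pti.
  move=> ->; lia.
case: (p t == j); lia.
Qed.

Section Real.
Variable R : realType.

Lemma sum_widen (f : nat -> R) a b : (a <= b)%N -> (forall n, 0 <= f n) ->
  \sum_(n < a) f n <= \sum_(n < b) f n.
Proof.
move=> ab f0; rewrite -!(big_mkord xpredT) (big_cat_nat (leq0n a) ab) /=.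
by rewrite lerDl sumr_ge0.
Qed.

Lemma sum_pt (f : nat -> R) {a t} : (a < t)%N -> (forall n, 0 <= f n) ->
  f a <= \sum_(n < t) f n.
Proof.
move=> hat f0; rewrite (bigD1 (Ordinal hat)) //= lerDl sumr_ge0 //.
Qed.

Lemma key K T (p : nat -> 'I_K) (i s : 'I_K) (u : 'I_K -> nat -> R) (m l : R)
  (bi bs : nat -> bool) :
  i != s -> 0 <= l ->
  (forall t, (t < T)%N -> forall j, u j (pulls p j t) <= u (p t) (pulls p (p t) t)) ->
  (forall n, l < n%:R -> ~~ bi n -> u i n < m) ->
  (forall n, ~~ bs n -> m <= u s n) ->
  forall t, (t <= T)%N ->
  (pulls p i t)%:R <= l + 1 + \sum_(n < pulls p i t) ((bi n)%:R : R)
     + \sum_(t' < t) \sum_(n < t') ((bs n)%:R : R).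
Proof.
move=> nis l0 Hmax Hi Hs; elim=> [|t IH] tT.
  by rewrite /pulls /= big_ord0 big_ord0 !addr0; lra.
have IH' := IH (ltnW tT).
have bge0 (b : bool) : 0 <= (b%:R : R) by case: b.
have sge0 t' : 0 <= \sum_(n < t') ((bs n)%:R : R) by apply: sumr_ge0.
rewrite pulls_S big_ord_recr /=.
have [pti|pti] := eqVneq (p t) i; last first.
  rewrite addn0; apply: (le_trans IH'); have := sge0 t; lra.
rewrite addn1 big_ord_recr /=.
set n := pulls p i t in IH' *.
have hS := sge0 t.
have hB := bge0 (bi n).
have hsum : 0 <= \sum_(k < n) ((bi k)%:R : R) by apply: sumr_ge0.
have hS2 : 0 <= \sum_(t' < t) \sum_(k < t') ((bs k)%:R : R) by apply: sumr_ge0.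
rewrite -natr1.
have [nl|ln] := leP (n%:R) l.
  lra.
have [bin|bin] := boolP (bi n).
  rewrite /= in IH' *; lra.
have ui := Hi n ln bin.
set ns := pulls p s t.
have [bsn|bsn] := boolP (bs ns).
  have nsn : (ns < t)%N.
    have := @pulls_le2 K p i s t nis; rewrite -/n -/ns.
    have : (0 < n)%N.
      rewrite lt0n; apply/eqP => n0; move: ln; rewrite n0 /=; lra.
    lia.
  have := sum_pt (fun k => ((bs k)%:R : R)) nsn (fun k => bge0 _).
  rewrite bsn /=; lra.
have us := Hs ns bsn.
have := Hmax t tT s; rewrite pti -/n -/ns; lra.
Qed.

End Real.

Lemma pulls_R (R : realType) K (p : nat -> 'I_K) i t :
  ((pulls p i t)%:R : R) = \sum_(k < t) ((p k == i)%:R : R).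
Proof.
elim: t => [|t IH]; first by rewrite big_ord0.
by rewrite pulls_S natrD IH big_ord_recr.
Qed.


Section Real2.
Variable R : realType.

Lemma ucb_lt (mi ms x G Gl : R) : 0 < ms - mi -> Gl = (ms - mi) ^+ 2 / 8 ->
  G < Gl -> aux_f mi x - aux_f mi mi <= G -> x + Num.sqrt (2 * G) < ms.
Proof.
move=> D0 -> GG; rewrite /aux_f subrr expr0n /= mulr0 subr0 => hx.
have G0 : 0 <= G by apply: le_trans hx; rewrite mulr_ge0 // ?sqr_ge0 // invr_ge0.
set s := Num.sqrt (2 * G).
have s0 : 0 <= s by exact: sqrtr_ge0.
have s2 : s ^+ 2 = 2 * G by rewrite sqr_sqrtr // mulr_ge0.
have h1 : (x - mi) ^+ 2 <= s ^+ 2 by rewrite s2; move: hx; rewrite -[_ <= G](ler_pM2l (_ : (0:R) < 2)) // mulrA mulfV ?mul1r //.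
have h2 : s ^+ 2 < (ms - mi) ^+ 2 / 4.
  rewrite s2; move: GG; lra.
have h3 : x - mi <= s by nra.
have h4 : s < (ms - mi) / 2 by nra.
lra.
Qed.

Lemma ucb_ge (mi x G : R) : aux_f mi x - aux_f mi mi <= G ->
  mi <= x + Num.sqrt (2 * G).
Proof.
rewrite /aux_f subrr expr0n /= mulr0 subr0 => hx.
have G0 : 0 <= G by apply: le_trans hx; rewrite mulr_ge0 // ?sqr_ge0 // invr_ge0.
set s := Num.sqrt (2 * G).
have s0 : 0 <= s by exact: sqrtr_ge0.
have s2 : s ^+ 2 = 2 * G by rewrite sqr_sqrtr // mulr_ge0.
have h1 : (x - mi) ^+ 2 <= s ^+ 2 by rewrite s2; move: hx; rewrite -[_ <= G](ler_pM2l (_ : (0:R) < 2)) // mulrA mulfV ?mul1r //.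
have h3 : mi - x <= s by nra.
lra.
Qed.

Lemma sum_const_le (f : nat -> R) c n : (forall k, f k <= c) ->
  \sum_(k < n) f k <= n%:R * c.
Proof.
move=> h; apply: (@le_trans _ _ (\sum_(k < n) c)); first by apply: ler_sum => k _; exact: h.
by rewrite sumr_const card_ord mulr_natl.
Qed.

End Real2.

Lemma tri T : (T + \sum_(t < T) t <= T * T)%N.
Proof. elim: T => [|T IH]; first by rewrite big_ord0. rewrite big_ord_recr /=. move: IH; set S := (\sum_(i < T) i)%N. lia. Qed.


Theorem theorem2 (R : realType) (d : measure_display) (Omega : measurableType d)
  (P : probability Omega R) (K : nat)
  (D : 'I_K -> probability R R) (mu : 'I_K -> R) (istar : 'I_K)
  (X : 'I_K -> nat -> Omega -> R)
  (A : seq (R * R) -> R) (x0 : R) (g ginv : R -> R -> R)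
  (T : nat) (pick : nat -> Omega -> 'I_K) :
  (forall i j, measurable_fun setT (X i j)) ->
  (forall i j B, measurable B -> P (X i j @^-1` B) = D i B) ->
  mutually_independent P (fun ij : 'I_K * nat => X ij.1 ij.2) ->
  (forall i, (D i).-integrable setT (fun x => x%:E) /\
             (\int[D i]_x x%:E = (mu i)%:E)%E) ->
  (forall i, mu i <= mu istar) ->
  (forall i k, measurable_fun setT (fun w => fo_iter A x0 (fun j => X i j w) k)) ->
  (forall i, fo_bounded P A x0 (X i) (aux_f (mu i)) (mu i) g) ->
  (0 < T)%N ->
  let delta := (T%:R ^+ 2)^-1 : R in
  let Delta := fun i => mu istar - mu i in
  (forall a b : R, 0 <= a -> a < b -> g b delta < g a delta) ->
  (forall i, 0 < Delta i ->
     0 <= ginv (Delta i ^+ 2 / 8) delta /\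
     g (ginv (Delta i ^+ 2 / 8) delta) delta = Delta i ^+ 2 / 8) ->
  (forall t i, measurable [set w | pick t w = i]) ->
  (forall t, (t < T)%N -> forall w j,
     ucb_index A x0 g delta (fun n => X j n w) (pulls (pick ^~ w) j t) <=
     ucb_index A x0 g delta (fun n => X (pick t w) n w)
               (pulls (pick ^~ w) (pick t w) t)) ->
  ((T%:R * mu istar)%:E - \sum_(t < T) 'E_P[fun w => mu (pick t w)] <=
   (\sum_(i | 0 < Delta i) Delta i * (ginv (Delta i ^+ 2 / 8) delta + 2))%:E)%E.
Proof.
move=> mX HXD Hind Hmean Hopt mx Hbnd T0 delta Delta Hdec Hginv mpick Hucb.
pose Apk t i := [set w | pick t w = i].
have mA t i : measurable (Apk t i) := mpick t i.
pose xx i n w := fo_iter A x0 (fun j => X i j w) n.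
pose good i n := [set w | aux_f (mu i) (xx i n w) - aux_f (mu i) (mu i) <= g n%:R delta].
pose bad i n := ~` good i n.
have mgood i n : measurable (good i n).
  have mF : measurable_fun setT (fun w => aux_f (mu i) (xx i n w) - aux_f (mu i) (mu i)).
    rewrite /aux_f; apply: measurable_realfun.measurable_funB; last exact: measurable_cst.
    apply: measurable_realfun.measurable_funM; first exact: measurable_cst.
    apply: measurable_realfun.measurable_funX; apply: measurable_realfun.measurable_funB; [exact: mx | exact: measurable_cst].
  have := measurable_fun_le measurableT mF (measurable_cst (g n%:R delta)).
  by rewrite setTI.
have mbad i n : measurable (bad i n) by apply: measurableC.
have dpos : 0 < delta by rewrite /delta invr_gt0 exprn_gt0 // ltr0n.
have Pbad i n : fine (P (bad i n)) <= delta.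
  have hg : ((1 - delta)%:E <= P (good i n))%E := Hbnd i n delta dpos.
  rewrite /bad probability_setC // (finePE P _ (mgood i n)) -EFinB /=.
  rewrite (finePE P _ (mgood i n)) lee_fin in hg; lra.
have Jb i n : J P (fun w => (w \in bad i n)%:R) = fine (P (bad i n)) :=
  J_indic P _ (mbad i n).
have pick_sum (f : 'I_K -> R) (k : 'I_K) : f k = \sum_i f i * (k == i)%:R.
  rewrite (bigD1 k) //= eqxx mulr1 big1 ?addr0 // => j.
  by rewrite eq_sym => /negbTE ->; rewrite mulr0.
have pick_ind (f : 'I_K -> R) t w : f (pick t w) = \sum_i f i * \1_(Apk t i) w.
  rewrite (pick_sum f (pick t w)); apply: eq_bigr => i _; congr (_ * _).
  rewrite indicE; case: eqP => [<-|ne]; first by rewrite mem_set.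
  by rewrite memNset.
have Int_pick (f : 'I_K -> R) (t : nat) : Int P (fun w => f (pick t w)).
  apply: (Int_eq P (f := fun w => \sum_i f i * \1_(Apk t i) w)); last first.
    by move=> w; rewrite -pick_ind.
  apply: Int_sum => i; apply: Int_scale; exact: Int_indic.
have J_pick (f : 'I_K -> R) (t : nat) :
    J P (fun w => f (pick t w)) = \sum_i f i * fine (P (Apk t i)).
  rewrite (_ : (fun w => f (pick t w)) = (fun w => \sum_i f i * \1_(Apk t i) w)); last first.
    by apply: funext => w; exact: pick_ind.
  rewrite J_sum; last by move=> i; apply: Int_scale; exact: Int_indic.
  apply: eq_bigr => i _; rewrite J_scale ?J_indic //; exact: Int_indic.
have HE t : ('E_P[fun w => mu (pick t w)] = (J P (fun w => mu (pick t w)))%:E)%E.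
  by rewrite unlock; apply: IJ; exact: Int_pick.
under eq_bigr do rewrite HE.
rewrite sumEFin -EFinB lee_fin.
have JD (t : nat) : J P (fun w => Delta (pick t w)) = mu istar - J P (fun w => mu (pick t w)).
  rewrite (_ : (fun w => Delta (pick t w)) = (fun w => mu istar + (-1) * mu (pick t w))); last first.
    by apply: funext => w; rewrite /Delta mulN1r.
  rewrite J_add; [|exact: Int_cst| apply: Int_scale; exact: Int_pick].
  rewrite J_cst J_scale; last exact: Int_pick.
  by rewrite mulN1r.
pose Lf w := \sum_(t < T) Delta (pick t w).
have LHS : T%:R * mu istar - \sum_(t < T) J P (fun w => mu (pick t w)) = J P Lf.
  rewrite /Lf J_sum; last by move=> t; exact: Int_pick.
  under [RHS]eq_bigr do rewrite JD.
  by rewrite sumrB sumr_const card_ord mulr_natl.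
pose l i := ginv (Delta i ^+ 2 / 8) delta.
pose H w := \sum_(i < K | 0 < Delta i) Delta i * (l i + 1
   + \sum_(n < T) ((w \in bad i n)%:R : R)
   + \sum_(t < T) \sum_(n < t) ((w \in bad istar n)%:R : R)).
have IntB i n : Int P (fun w => (w \in bad i n)%:R) := Int_indic P _ (mbad i n).
have IntH : Int P H.
  apply: Int_sum => i; apply: Int_scale.
  apply: Int_add; last by apply: Int_sum => t; apply: Int_sum => n; exact: IntB.
  apply: Int_add; last by apply: Int_sum => n; exact: IntB.
  exact: Int_cst.
have IntL : Int P Lf by apply: Int_sum => t; exact: Int_pick.
have LH w : Lf w <= H w.
  have e1 : Lf w = \sum_i Delta i * (pulls (pick ^~ w) i T)%:R.
    rewrite /Lf; under eq_bigr do rewrite (pick_sum Delta).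
    rewrite exchange_big /=; apply: eq_bigr => i _.
    by rewrite (pulls_R R) mulr_sumr.
  rewrite e1 (bigID (fun i => 0 < Delta i)) /=.
  rewrite [X in _ + X]big1 ?addr0; last first.
    move=> i; have := Hopt i; rewrite /Delta => h1; rewrite -leNgt => h2.
    have -> : mu istar - mu i = 0 by lra.
    by rewrite mul0r.
  apply: ler_sum => i Di.
  have [l0 gl] := Hginv i Di.
  apply: ler_wpM2l; first exact: ltW.
  have nis : i != istar by apply/eqP => e; move: Di; rewrite /Delta e subrr ltxx.
  pose u j n := ucb_index A x0 g delta (fun n => X j n w) n.
  have Hi n : l i < n%:R -> ~~ (w \in bad i n) -> u i n < mu istar.
    move=> ln; rewrite /bad in_setC negbK => /set_mem gw.
    rewrite /u /ucb_index; apply: (@ucb_lt R (mu i) _ _ _ (g (l i) delta)).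
    - exact: Di.
    - exact: gl.
    - exact: Hdec _ _ l0 ln.
    - exact: gw.
  have Hs n : ~~ (w \in bad istar n) -> mu istar <= u istar n.
    rewrite /bad in_setC negbK => /set_mem gw.
    rewrite /u /ucb_index; apply: (@ucb_ge R (mu istar)); exact: gw.
  have Kk := @key R K T (pick ^~ w) i istar u (mu istar) (l i)
    (fun n => w \in bad i n) (fun n => w \in bad istar n) nis l0
    (fun t tT j => Hucb t tT w j) Hi Hs T (leqnn T).
  apply: le_trans Kk _.
  apply: lerD; last exact: lexx.
  apply: lerD; first exact: lexx.
  apply: (@sum_widen R (fun n => ((w \in bad i n)%:R : R))); [exact: pulls_le | by move=> n; case: (_ \in _)].
have IntS i : Int P (fun w => \sum_(n < T) ((w \in bad i n)%:R : R)).
  by apply: Int_sum => n; exact: IntB.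
have IntSt : Int P (fun w => \sum_(t < T) \sum_(n < t) ((w \in bad istar n)%:R : R)).
  by apply: Int_sum => t; apply: Int_sum => n; exact: IntB.
have JH : J P H <= \sum_(i | 0 < Delta i) Delta i * (l i + 2).
  rewrite /H J_sum; last first.
    move=> i; apply: Int_scale; apply: Int_add; last exact: IntSt.
    apply: Int_add; last exact: IntS.
    exact: Int_cst.
  apply: ler_sum => i Di.
  rewrite J_scale; last first.
    apply: Int_add; last exact: IntSt.
    apply: Int_add; last exact: IntS.
    exact: Int_cst.
  apply: ler_wpM2l; first exact: ltW.
  rewrite J_add; [| apply: Int_add; [exact: Int_cst | exact: IntS] | exact: IntSt].
  rewrite J_add; [| exact: Int_cst | exact: IntS].
  rewrite J_cst J_sum; last by move=> n; exact: IntB.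
  rewrite J_sum; last by move=> t; apply: Int_sum => n; exact: IntB.
  rewrite (eq_bigr (fun n : 'I_T => fine (P (bad i n)))); last by move=> n _; exact: Jb.
  rewrite [X in _ + X](eq_bigr (fun t : 'I_T => \sum_(n < t) fine (P (bad istar n)))); last first.
    move=> t _ /=; rewrite J_sum; last by move=> n; exact: IntB.
    by apply: eq_bigr => n _; exact: Jb.
  have h1 : \sum_(n < T) fine (P (bad i n)) <= T%:R * delta :=
    @sum_const_le R (fun n => fine (P (bad i n))) delta T (fun n => Pbad i n).
  have h2 : \sum_(t < T) \sum_(n < t) fine (P (bad istar n)) <= \sum_(t < T) ((t : nat)%:R * delta).
    apply: ler_sum => t _.
    exact: (@sum_const_le R (fun n => fine (P (bad istar n))) delta t (fun n => Pbad istar n)).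
  have h3 : \sum_(t < T) ((t : nat)%:R * delta) = (\sum_(t < T) (t : nat))%:R * delta.
    by rewrite -mulr_suml natr_sum.
  have h4 : T%:R * delta + (\sum_(t < T) (t : nat))%:R * delta <= 1.
    have := tri T; rewrite -(ler_nat R) natrD natrM => h.
    rewrite -mulrDl.
    have e : T%:R * T%:R * delta = 1.
      by rewrite /delta expr2 mulfV // mulf_neq0 // pnatr_eq0 -lt0n.
    apply: (le_trans (ler_wpM2r (ltW dpos) h)); by rewrite e.
  lra.
by rewrite LHS; apply: le_trans (J_le P _ _ IntL IntH LH) JH.
Qed.
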